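(* Let $\Lambda$ be a measurable space of hyperparameter configurations, and let $D$ be a set of allowable probability distributions on $\Lambda$ (the allowable random-search hyper-hyperparameters) such that for all $\mu,\nu\in D$ the Rényi-$\infty$-divergence satisfies $D_\infty(\mu\|\nu)\le\gamma$, i.e. $\mu(A)\le e^{\gamma}\nu(A)$ for every measurable $A\subseteq\Lambda$. Let $K\in\mathbb{N}$, let $t>0$, and consider the $(K,R)$-defended random-search EHPO with its defended reasoner $\mathcal{B}_*$ built from a naive reasoner $\mathcal{B}_{\mathrm{n}}$ (as defined in the context). If $$R\ \ge\ \sqrt{\frac{t\,\exp(\gamma K)}{K}},$$ then $\mathcal{B}_*$ is $t$-non-deceptive. In particular, a choice $R=O(\sqrt{t})$ suffices.
   Context: Random-search hyperparameter optimization (HPO): a trial consists of drawing a hyperparameter configuration from a chosen distribution $\mu\in D$ (independently of all other trials), training with it, and recording the outcome; a log is the sequence of recorded trials. A reasoner is given by a belief operator $\mathcal{B}$: for a log $L$ and a proposition $p$ (e.g. a comparative claim about algorithms), $\mathcal{B}p$ holds on $L$ if the reasoner concludes $p$ from $L$. The naive reasoner $\mathcal{B}_{\mathrm{n}}$ draws conclusions only from a single log with exactly $K$ trials, and it never concludes both $p$ and $\lnot p$ from the same log. The $(K,R)$-defended random-search EHPO uses the reasoner $\mathcal{B}_*$ which draws conclusions only from a single log with exactly $KR$ trials (produced by random search): to evaluate a proposition $p$ it splits the log into $R$ consecutive groups of $K$ trials each, evaluates $\mathcal{B}_{\mathrm{n}}$ on $p$ for each group, and concludes $p$ only if $\mathcal{B}_{\mathrm{n}}$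 concludes $p$ on all $R$ groups. An adversary may repeatedly run random-search trials using any allowable distributions in $D$ (possibly different ones, chosen adaptively), and may discard logs and present any log it has produced; its running time is the total number of trials it runs. For a statement $q$ about the reasoner's conclusions, $\Diamond_t q$ means that some adversary strategy produces, in expected time at most $t$, a log on which $q$ holds. The reasoner $\mathcal{B}_*$ is $t$-non-deceptive if for every proposition $p$ it is not the case that $\Diamond_t\mathcal{B}_*p\land\Diamond_t\mathcal{B}_*\lnot p$. *)

(* Defs.v *)
From HB Require Import structures.
From mathcomp Require Import all_boot all_order all_algebra.
From mathcomp Require Import all_classical all_reals all_analysis.
From mathcomp Require Import measurable_realfun.
Set Implicit Arguments. Unset Strict Implicit. Unset Printing Implicit Defensive.
Import Order.TTheory GRing.Theory Num.Theory.
Local Open Scope classical_set_scope.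
Local Open Scope ring_scope.

Section EHPO.
Context {R : realType} {dL : measure_display} {Lam : measurableType dL}.

(** Random search, as run by an adversary.  [Y m] is the configuration drawn
    in the m-th trial; [F m] is the information available to the adversary
    just before the m-th trial (it contains all previous trials, and may
    contain extra randomisation of the adversary); [mu m w] is the allowable
    distribution (chosen adaptively, i.e. [F m]-measurably) from which the
    m-th configuration is drawn, independently of everything else known so far:
    the conditional law of [Y m] given [F m] is [mu m]. *)
Definition random_search_run (D : set (probability Lam R))
  {d : measure_display} {Om : measurableType d} (P : probability Om R)
  (F : nat -> set (set Om)) (Y : nat -> Om -> Lam)
  (mu : nat -> Om -> probability Lam R) : Prop :=
  [/\ (forall m, sigma_algebra setT (F m) /\ F m `<=` measurable) /\
      (forall m n, (m <= n)%N -> F m `<=` F n),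
      forall i m, (i < m)%N -> forall A, measurable A -> F m (Y i @^-1` A),
      forall m w, D (mu m w),
      (forall m (A : set Lam), measurable A -> forall B : set \bar R, measurable B ->
         F m ((fun w => mu m w A) @^-1` B)) &
      forall m E (A : set Lam), F m E -> measurable A ->
         P (E `&` Y m @^-1` A) = (\int[P]_(w in E) mu m w A)%E].

Definition log_of {d : measure_display} {Om : measurableType d}
  (n : nat) (Y : nat -> Om -> Lam) (j : nat) (w : Om) : seq Lam :=
  mkseq (fun i => Y (j * n + i)%N w) n.

(** [diamond D n t q] is the modal statement "<>_t q": some adversary
    strategy, running random-search logs of [n] trials each with allowable
    distributions from [D] (chosen adaptively), produces in expected time
    (total number of trials) at most [t] a log on which [q] holds.  The
    adversary runs [T w] logs and presents the log number [J w < T w]. *)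
Definition diamond (D : set (probability Lam R)) (n : nat) (t : R)
  (q : seq Lam -> Prop) : Prop :=
  exists (d : measure_display) (Om : measurableType d) (P : probability Om R)
    (F : nat -> set (set Om)) (Y : nat -> Om -> Lam)
    (mu : nat -> Om -> probability Lam R) (T J : Om -> nat),
    [/\ random_search_run D P F Y mu,
        measurable_fun setT T,
        {ae P, forall w, (J w < T w)%N /\ q (log_of n Y (J w) w)} &
        (\int[P]_w (((n * T w)%N)%:R : R)%:E <= t%:E)%E].

Definition defended {Pr : Type} (K Rr : nat) (Bn : Pr -> seq Lam -> Prop)
  (p : Pr) (L : seq Lam) : Prop :=
  size L = (K * Rr)%N /\
  forall g : nat, (g < Rr)%N -> Bn p (take K (drop (g * K) L)).

Definition non_deceptive {Pr : Type} (neg : Pr -> Pr)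
  (D : set (probability Lam R)) (n : nat) (t : R)
  (B : Pr -> seq Lam -> Prop) : Prop :=
  forall p : Pr, ~ (diamond D n t (B p) /\ diamond D n t (B (neg p))).

End EHPO.

(* Main.v *)
Require Import Defs.
From HB Require Import structures.
From mathcomp Require Import all_boot all_order all_algebra.
From mathcomp Require Import all_classical all_reals all_analysis.
From mathcomp Require Import measurable_realfun.
From mathcomp Require Import ring lra zify.
Import Order.TTheory GRing.Theory Num.Theory.
Local Open Scope classical_set_scope.
Local Open Scope ring_scope.

Set Implicit Arguments. Unset Strict Implicit. Unset Printing Implicit Defensive.


Section rect.
Context {d1 d2 : measure_display} (T1 : measurableType d1) (T2 : measurableType d2).

Definition rectT := (T1 * T2)%type.
HB.instance Definition _ := Pointed.on rectT.

Definition rects : set (set rectT) := [set A `*` B | A in measurable & B in measurable].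

Lemma rects0 : rects set0.
Proof. by exists set0 => //; exists set0 => //; rewrite setX0. Qed.

Lemma rectsI : setI_closed rects.
Proof.
move=> X Y [X1 mX1 [X2 mX2 <-{X}]] [Y1 mY1 [Y2 mY2 <-{Y}]].
exists (X1 `&` Y1); first exact: measurableI.
by exists (X2 `&` Y2); [exact: measurableI|rewrite setXI].
Qed.

Lemma rectsD : semi_setD_closed rects.
Proof.
move=> X Y [X1 mX1 [X2 mX2 <-{X}]] [Y1 mY1 [Y2 mY2 <-{Y}]].
exists [set (X1 `\` Y1) `*` X2; (X1 `&` Y1) `*` (X2 `\` Y2)]; split.
- exact: finite_set2.
- move=> Z [->|->].
    by exists (X1 `\` Y1); [exact: measurableD|exists X2].
  by exists (X1 `&` Y1); [exact: measurableI|exists (X2 `\` Y2) => //; exact: measurableD].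
- rewrite bigcup_setU !bigcup_set1; apply/seteqP; split => -[x y] /=.
    move=> [[xX1 yX2] /not_andP nxy].
    case: (pselect (Y1 x)) => xY1; [right|left]; split => //.
    by case: nxy.
  by move=> [[[xX1 nxY1] yX2]|[[xX1 xY1] [yX2 nyY2]]]; split => //; case.
- by move=> A B [->|->] [->|->] //= [[x y]] /=; tauto.
Qed.

HB.instance Definition _ := @isSemiRingOfSets.Build default_measure_display rectT
  rects rects0 rectsI rectsD.

End rect.


Section prodle.
Context {d1 d2 : measure_display} (T1 : measurableType d1) (T2 : measurableType d2)
  (R : realType).

Lemma prod_le (M1 M2 : {measure set (T1 * T2) -> \bar R}) (a b : R) :
  0 <= a -> 0 <= b -> (M1 setT < +oo)%E -> (M2 setT < +oo)%E ->
  (forall A B, measurable A -> measurable B ->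
     M1 (A `*` B) * a%:E <= M2 (A `*` B) * b%:E)%E ->
  forall S, measurable S -> (M1 S * a%:E <= M2 S * b%:E)%E.
Proof.
move=> a0 b0 f1 f2 Hr.
pose G := [set S : set (T1 * T2) | measurable S /\ (M1 S * a%:E <= M2 S * b%:E)%E].
have finM (M : {measure set (T1 * T2) -> \bar R}) S : (M setT < +oo)%E ->
    measurable S -> (M S < +oo)%E.
  move=> fM mS.
  by apply: le_lt_trans fM; apply: le_measure; rewrite ?inE.
have mG : monotone G.
  split.
  - move=> F ndF GF.
    have mF i : measurable (F i) by case: (GF i).
    have mU : measurable (\bigcup_i F i) by exact: bigcup_measurable.
    split => //.
    have c1 := nondecreasing_cvg_mu (mu:=M1) mF mU ndF.
    have c2 := nondecreasing_cvg_mu (mu:=M2) mF mU ndF.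
    apply: (lee_cvg_to (cvgeZr (y := a%:E) isT c1) (cvgeZr (y := b%:E) isT c2)).
    by apply: nearW => i; case: (GF i).
  - move=> F niF GF.
    have mF i : measurable (F i) by case: (GF i).
    have mU : measurable (\bigcap_i F i) by exact: bigcap_measurable.
    split => //.
    have c1 := nonincreasing_cvg_mu (mu:=M1) (finM _ _ f1 (mF 0%N)) mF mU niF.
    have c2 := nonincreasing_cvg_mu (mu:=M2) (finM _ _ f2 (mF 0%N)) mF mU niF.
    apply: (lee_cvg_to (cvgeZr (y := a%:E) isT c1) (cvgeZr (y := b%:E) isT c2)).
    by apply: nearW => i; case: (GF i).
pose Rr := (@measurable _ (SetRing.type (rectT T1 T2))) : set (set (T1 * T2)).
have rR : setring Rr.
  split.
  - exact: (@measurable0 _ (SetRing.type (rectT T1 T2))).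
  - by move=> A B mA mB; exact: (@measurableU _ (SetRing.type (rectT T1 T2))).
  - by move=> A B mA mB; exact: (@measurableD _ (SetRing.type (rectT T1 T2))).
have RG : Rr `<=` G.
  move=> X /(@SetRing.ring_finite_set _ (rectT T1 T2)) [B [Bfin _ Btriv Bm ->]].
  have Bm' Y : B Y -> measurable (Y : set (T1 * T2)).
    move=> /mem_set /Bm [A mA [C mC <-]]; exact: measurableX.
  split; first by apply: fin_bigcup_measurable.
  rewrite !measure_fin_bigcup//.
  pose F1 Y := if `[< measurable Y >] then M1 Y else 0%E.
  pose F2 Y := if `[< measurable Y >] then M2 Y else 0%E.
  have F1E : \sum_(Y \in B) M1 Y = \sum_(Y \in B) F1 Y.
    by apply: eq_fsbigr => Y /set_mem /Bm'; rewrite /F1 => mY; rewrite asboolT.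
  have F2E : \sum_(Y \in B) M2 Y = \sum_(Y \in B) F2 Y.
    by apply: eq_fsbigr => Y /set_mem /Bm'; rewrite /F2 => mY; rewrite asboolT.
  have F1ge0 Y : (0 <= F1 Y)%E by rewrite /F1; case: asboolP => // ?; exact: measure_ge0.
  have F2ge0 Y : (0 <= F2 Y)%E by rewrite /F2; case: asboolP => // ?; exact: measure_ge0.
  rewrite F1E F2E !ge0_mule_fsuml//.
  apply: lee_fsum => // Y BY.
  have := Bm Y (mem_set BY); move=> [A mA [C mC YE]].
  rewrite /F1 /F2 asboolT; last by rewrite -YE; exact: measurableX.
  by rewrite -YE; apply: Hr.
move=> S mS.
suff : <<sr Rr>> S by move/(monotone_setring_sub_g_sigma_ring mG rR RG) => [].
move: S mS; rewrite measurable_prod_measurableType.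
apply: smallest_sub.
  have [s0 sD sU] := smallest_sigma_ring Rr.
  split => // X sX.
  apply: sD => //; apply: sub_gen_smallest.
  apply: (@SetRing.measurable_subring _ (rectT T1 T2)).
  by exists setT => //; exists setT => //; rewrite setXTT.
move=> _ [A mA [C mC <-]]; apply: sub_gen_smallest.
by apply: (@SetRing.measurable_subring _ (rectT T1 T2)); exists A => //; exists C.
Qed.
End prodle.


Section prodle2.
Context {d1 d2 : measure_display} (T1 : measurableType d1) (T2 : measurableType d2)
  (R : realType).
Context {e1 e2 : measure_display} (O1 : measurableType e1) (O2 : measurableType e2).
Variables (P1 : {measure set O1 -> \bar R}) (P2 : {measure set O2 -> \bar R}).
Variables (E1 : set O1) (E2 : set O2) (mE1 : measurable E1) (mE2 : measurable E2).
Variables (g1 : O1 -> T1 * T2) (g2 : O2 -> T1 * T2).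
Hypotheses (mg1 : measurable_fun setT g1) (mg2 : measurable_fun setT g2).

Lemma prod_le2 (a b : R) :
  0 <= a -> 0 <= b -> (P1 setT < +oo)%E -> (P2 setT < +oo)%E ->
  (forall A B, measurable A -> measurable B ->
     P1 (E1 `&` g1 @^-1` (A `*` B)) * a%:E <= P2 (E2 `&` g2 @^-1` (A `*` B)) * b%:E)%E ->
  forall S, measurable S ->
    (P1 (E1 `&` g1 @^-1` S) * a%:E <= P2 (E2 `&` g2 @^-1` S) * b%:E)%E.
Proof.
move=> a0 b0 f1 f2 Hr S mS.
pose M1 := pushforward (mrestr P1 mE1) g1.
pose M2 := pushforward (mrestr P2 mE2) g2.
have E1E X : P1 (E1 `&` g1 @^-1` X) = M1 X by rewrite /M1 /pushforward /mrestr setIC.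
have E2E X : P2 (E2 `&` g2 @^-1` X) = M2 X by rewrite /M2 /pushforward /mrestr setIC.
rewrite E1E E2E.
apply: (@prod_le _ _ T1 T2 R M1 M2) => //.
- rewrite /M1 /pushforward /mrestr; apply: le_lt_trans f1.
  by apply: le_measure; rewrite ?inE//; apply: measurableI => //; rewrite -[X in measurable X]setTI; exact: mg1.
- rewrite /M2 /pushforward /mrestr; apply: le_lt_trans f2.
  by apply: le_measure; rewrite ?inE//; apply: measurableI => //; rewrite -[X in measurable X]setTI; exact: mg2.
- move=> A B mA mB; have := Hr A B mA mB.
  by rewrite E1E E2E.
Qed.
End prodle2.


Section run.
Context {R : realType} {dL : measure_display} {Lam : measurableType dL}.
Context (D : set (probability Lam R)) {d : measure_display} {Om : measurableType d}
  (P : probability Om R) (F : nat -> set (set Om)) (Y : nat -> Om -> Lam)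
  (mu : nat -> Om -> probability Lam R).
Hypothesis H : random_search_run D P F Y mu.

Lemma run_sigma m : sigma_algebra setT (F m).
Proof. by case: H => [[/(_ m) []]]. Qed.

Lemma run_meas m E : F m E -> measurable E.
Proof. by case: H => [[/(_ m) [_ ]]] => h *; exact: h. Qed.

Lemma run_mono m n E : (m <= n)%N -> F m E -> F n E.
Proof. by move=> mn FE; case: H => [[_ h]] _ _ _ _; exact: h mn E FE. Qed.

Lemma run_Y i m A : (i < m)%N -> measurable A -> F m (Y i @^-1` A).
Proof. by move=> im mA; case: H => _ h _ _ _; exact: h. Qed.

Lemma run_D m w : D (mu m w).
Proof. by case: H. Qed.

Lemma run_mu_meas m A : measurable A -> measurable_fun setT (fun w => mu m w A).
Proof.
case: H => _ _ _ h _ mA _ B mB; rewrite setTI.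
exact: (run_meas (h m A mA B mB)).
Qed.

Lemma run_kernel m E A : F m E -> measurable A ->
  P (E `&` Y m @^-1` A) = (\int[P]_(w in E) mu m w A)%E.
Proof. by case: H => _ _ _ _ h; exact: h. Qed.

Lemma run_Ymeas i : measurable_fun setT (Y i).
Proof.
move=> _ A mA; rewrite setTI; apply: (@run_meas i.+1).
exact: run_Y.
Qed.

Fixpoint Zt (m n : nat) (w : Om) : n.-tuple Lam :=
  match n with
  | 0 => [tuple]
  | n'.+1 => cons_tuple (Y m w) (Zt m.+1 n' w)
  end.

Lemma Zt_val m n w : tval (Zt m n w) = mkseq (fun i => Y (m + i) w) n.
Proof.
elim: n m => [//|n IH] m /=; rewrite IH /mkseq /= addn0; congr cons.
rewrite -[in RHS](addn0 1%N) iotaDl -map_comp; apply: eq_map => i /=.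
by rewrite addnA addn1.
Qed.

Lemma tnth_Zt m n w (i : 'I_n) : tnth (Zt m n w) i = Y (m + i) w.
Proof.
rewrite (tnth_nth (Y m w)) Zt_val nth_mkseq //.
Qed.

Lemma Zt_F m n S : measurable S -> F (m + n) (Zt m n @^-1` S).
Proof.
move=> mS.
pose T' := g_sigma_algebraType (F (m + n)).
have mf : measurable_fun [set: T'] (Zt m n : T' -> n.-tuple Lam).
  apply/measurable_fun_tnthP => i _ B mB; rewrite setTI.
  apply: sub_sigma_algebra.
  have -> : ((fun t : n.-tuple Lam => tnth t i) \o (Zt m n : T' -> _)) @^-1` B = Y (m + i) @^-1` B.
    by apply/seteqP; split => w /=; rewrite tnth_Zt.
  by apply: run_Y => //; rewrite ltn_add2l.
have := mf measurableT S mS; rewrite setTI.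
by rewrite /measurable /= smallest_id //; exact: run_sigma.
Qed.

Lemma Zt_meas m n : measurable_fun setT (Zt m n).
Proof.
move=> _ S mS; rewrite setTI; exact: (run_meas (Zt_F m mS)).
Qed.

End run.


Lemma PfineE {R : realType} {d} {Om : measurableType d} (P : probability Om R) A :
  measurable A -> P A = (fine (P A))%:E.
Proof. by move=> mA; rewrite fineK // fin_num_measure. Qed.

Lemma Pfine_ge0 {R : realType} {d} {Om : measurableType d} (P : probability Om R) A :
  0 <= fine (P A).
Proof. by apply: fine_ge0; apply: measure_ge0. Qed.

Lemma Pfine_le {R : realType} {d} {Om : measurableType d} (P : probability Om R) A B :
  measurable A -> measurable B -> A `<=` B -> fine (P A) <= fine (P B).
Proof.
move=> mA mB AB; rewrite -lee_fin -!PfineE //.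
by apply: le_measure; rewrite ?inE.
Qed.

Lemma fineL1 {R : realType} (u v : \bar R) (a b : R) :
  u \is a fin_num -> v \is a fin_num ->
  (u * a%:E <= v * b%:E)%E = (fine u * a <= fine v * b).
Proof. by move=> fu fv; rewrite -[u](fineK fu) -[v](fineK fv) -!EFinM lee_fin /=. Qed.

Lemma fineL2 {R : realType} (u1 u2 u3 u4 : \bar R) (c : R) :
  u1 \is a fin_num -> u2 \is a fin_num -> u3 \is a fin_num -> u4 \is a fin_num ->
  (u1 * u2 <= (c%:E * u3) * u4)%E -> fine u1 * fine u2 <= c * fine u3 * fine u4.
Proof.
move=> f1 f2 f3 f4.
by rewrite -[u1](fineK f1) -[u2](fineK f2) -[u3](fineK f3) -[u4](fineK f4) -!EFinM lee_fin /=.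
Qed.

Section runI.
Context {R : realType} {dL : measure_display} {Lam : measurableType dL}.
Context (D : set (probability Lam R)) {d : measure_display} {Om : measurableType d}
  (P : probability Om R) (F : nat -> set (set Om)) (Y : nat -> Om -> Lam)
  (mu : nat -> Om -> probability Lam R).
Hypothesis H : random_search_run D P F Y mu.

Lemma run_I m E E' : F m E -> F m E' -> F m (E `&` E').
Proof.
move=> FE FE'.
pose T' := g_sigma_algebraType (F m).
have := @measurableI _ T' E E'.
rewrite /measurable /= smallest_id; last exact: (run_sigma H).
by apply.
Qed.

Lemma run_T m : F m setT.
Proof.
pose T' := g_sigma_algebraType (F m).
have := @measurableT _ T'.
by rewrite /measurable /= smallest_id; last exact: (run_sigma H).
Qed.

Lemma run_C m E : F m E -> F m (~` E).
Proof.
pose T' := g_sigma_algebraType (F m).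
have := @measurableC _ T' E.
by rewrite /measurable /= smallest_id; last exact: (run_sigma H).
Qed.
End runI.

Section compare.
Context {R : realType} {dL : measure_display} {Lam : measurableType dL}.
Context (D : set (probability Lam R)) (gamma : R).
Hypothesis hD : forall mu nu : probability Lam R, D mu -> D nu ->
          forall A : set Lam, measurable A -> (mu A <= (expR gamma)%:E * nu A)%E.
Context {d1 : measure_display} {Om1 : measurableType d1}
  (P1 : probability Om1 R) (F1 : nat -> set (set Om1)) (Y1 : nat -> Om1 -> Lam)
  (mu1 : nat -> Om1 -> probability Lam R).
Hypothesis H1 : random_search_run D P1 F1 Y1 mu1.
Context {d2 : measure_display} {Om2 : measurableType d2}
  (P2 : probability Om2 R) (F2 : nat -> set (set Om2)) (Y2 : nat -> Om2 -> Lam)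
  (mu2 : nat -> Om2 -> probability Lam R).
Hypothesis H2 : random_search_run D P2 F2 Y2 mu2.

Local Notation x := (expR gamma).

Lemma step1 m1 m2 E1 E2 A : F1 m1 E1 -> F2 m2 E2 -> measurable A ->
 (P1 (E1 `&` Y1 m1 @^-1` A) * P2 E2 <=
   (x%:E * P1 E1) * P2 (E2 `&` Y2 m2 @^-1` A))%E.
Proof.
move=> FE1 FE2 mA.
have mE1 := run_meas H1 FE1; have mE2 := run_meas H2 FE2.
rewrite (run_kernel H1) // (run_kernel H2) //.
set I1 := (\int[P1]_(w in E1) mu1 m1 w A)%E.
have I10 : (0 <= I1)%E by apply: integral_ge0 => w _; exact: measure_ge0.
have b w' : (I1 <= (x%:E * P1 E1) * mu2 m2 w' A)%E.
  apply: (@le_trans _ _ (\int[P1]_(w in E1) (cst (x%:E * mu2 m2 w' A)) w)%E).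
    apply: ge0_le_integral => //.
    - exact: measurable_funTS (run_mu_meas H1 m1 mA).
    - by move=> w _; apply: hD => //; [exact: (run_D H1)|exact: (run_D H2)].
  by rewrite (@integral_cst _ _ _ P1 E1 mE1) muleAC.
rewrite -[X in (X <= _)%E](@integral_cst _ _ _ P2 E2 mE2).
rewrite -ge0_integralZl //.
- apply: ge0_le_integral => //.
  + apply: measurable_funeM; exact: measurable_funTS (run_mu_meas H2 m2 mA).
- exact: measurable_funTS (run_mu_meas H2 m2 mA).
- by apply: mule_ge0; [rewrite lee_fin expR_ge0|exact: measure_ge0].
Qed.

Lemma compare n : forall m1 m2 E1 E2 S, F1 m1 E1 -> F2 m2 E2 -> measurable S ->
 (P1 (E1 `&` Zt Y1 m1 n @^-1` S) * (fine (P2 E2))%:E <=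
   P2 (E2 `&` Zt Y2 m2 n @^-1` S) * (x ^+ n * fine (P1 E1))%:E)%E.
Proof.
have x0 : 0 <= x by rewrite expR_ge0.
elim: n => [|n IH] m1 m2 E1 E2 S FE1 FE2 mS.
  have mE1 := run_meas H1 FE1; have mE2 := run_meas H2 FE2.
  rewrite expr0 mul1r.
  have [S0|S0] := pselect (S [tuple]).
    have -> : Zt Y1 m1 0 @^-1` S = setT.
      by apply/seteqP; split => // w _; rewrite /preimage /= tuple0.
    have -> : Zt Y2 m2 0 @^-1` S = setT.
      by apply/seteqP; split => // w _; rewrite /preimage /= tuple0.
    by rewrite !setIT (PfineE P1 mE1) (PfineE P2 mE2) /= -!EFinM mulrC.
  have -> : Zt Y1 m1 0 @^-1` S = set0.
    by apply/seteqP; split => // w; rewrite /preimage /= tuple0.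
  have -> : Zt Y2 m2 0 @^-1` S = set0.
    by apply/seteqP; split => // w; rewrite /preimage /= tuple0.
  by rewrite !setI0 !measure0 !mul0e.
have mE1 := run_meas H1 FE1; have mE2 := run_meas H2 FE2.
pose g1 w := (Y1 m1 w, Zt Y1 m1.+1 n w).
pose g2 w := (Y2 m2 w, Zt Y2 m2.+1 n w).
pose S' := (fun yz : Lam * n.-tuple Lam => cons_tuple yz.1 yz.2) @^-1` S.
have mS' : measurable S'.
  have := @measurable_cons _ _ (Lam * n.-tuple Lam)%type Lam fst n snd
     measurable_fst measurable_snd measurableT S mS.
  by rewrite setTI.
have -> : Zt Y1 m1 n.+1 @^-1` S = g1 @^-1` S' by [].
have -> : Zt Y2 m2 n.+1 @^-1` S = g2 @^-1` S' by [].
apply: (@prod_le2 _ _ Lam (n.-tuple Lam) R _ _ Om1 Om2 P1 P2 E1 E2 mE1 mE2 g1 g2) => //.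
- by apply: measurable_fun_pair; [exact: (run_Ymeas H1 m1)|exact: (Zt_meas H1 m1.+1)].
- by apply: measurable_fun_pair; [exact: (run_Ymeas H2 m2)|exact: (Zt_meas H2 m2.+1)].
- exact: Pfine_ge0.
- by apply: mulr_ge0; [exact: exprn_ge0|exact: Pfine_ge0].
- by rewrite ltey_eq fin_num_measure.
- by rewrite ltey_eq fin_num_measure.
move=> A B mA mB.
pose E1' := E1 `&` Y1 m1 @^-1` A.
pose E2' := E2 `&` Y2 m2 @^-1` A.
have FE1' : F1 m1.+1 E1'.
  apply: (run_I H1); [exact: (run_mono H1 (leqnSn m1))|exact: (run_Y H1)].
have FE2' : F2 m2.+1 E2'.
  apply: (run_I H2); [exact: (run_mono H2 (leqnSn m2))|exact: (run_Y H2)].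
have -> : E1 `&` g1 @^-1` (A `*` B) = E1' `&` Zt Y1 m1.+1 n @^-1` B.
  by rewrite /E1' /g1 -setIA; congr (_ `&` _); apply/seteqP; split => w [].
have -> : E2 `&` g2 @^-1` (A `*` B) = E2' `&` Zt Y2 m2.+1 n @^-1` B.
  by rewrite /E2' /g2 -setIA; congr (_ `&` _); apply/seteqP; split => w [].
have ih := IH _ _ _ _ _ FE1' FE2' mB.
have st := step1 FE1 FE2 mA.
have mE1' := run_meas H1 FE1'; have mE2' := run_meas H2 FE2'.
set Z1 := (E1' `&` Zt Y1 m1.+1 n @^-1` B) in ih *.
set Z2 := (E2' `&` Zt Y2 m2.+1 n @^-1` B) in ih *.
have mZ1 : measurable Z1 := measurableI _ _ mE1' (run_meas H1 (Zt_F H1 m1.+1 mB)).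
have mZ2 : measurable Z2 := measurableI _ _ mE2' (run_meas H2 (Zt_F H2 m2.+1 mB)).
rewrite -/E1' -/E2' in st.
set a1 := fine (P1 Z1).
set a2 := fine (P2 Z2).
set p1' := fine (P1 E1'); set p2' := fine (P2 E2').
set p1 := fine (P1 E1); set p2 := fine (P2 E2).
have {}ih : a1 * p2' <= a2 * (x ^+ n * p1').
  by move: ih; rewrite fineL1 // fin_num_measure.
have {}st : p1' * p2 <= x * p1 * p2'.
  by apply: fineL2 st; rewrite fin_num_measure.
suff : a1 * p2 <= a2 * (x ^+ n.+1 * p1).
  by rewrite fineL1 // fin_num_measure.

have a10 : 0 <= a1 by exact: Pfine_ge0.
have a20 : 0 <= a2 by exact: Pfine_ge0.
have p10 : 0 <= p1 by exact: Pfine_ge0.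
have p20 : 0 <= p2 by exact: Pfine_ge0.
have p1'0 : 0 <= p1' by exact: Pfine_ge0.
have a1p1' : a1 <= p1' by apply: Pfine_le => //; exact: subIsetl.
have xn0 : 0 <= x ^+ n by exact: exprn_ge0.
have [p2'0|p2'0] := eqVneq p2' 0.
  rewrite p2'0 mulr0 in st.
  have : p1' * p2 = 0 by apply/eqP; rewrite eq_le st mulr_ge0.
  move=> h.
  apply: (@le_trans _ _ (p1' * p2)).
    by apply: ler_wpM2r.
  by rewrite h; apply: mulr_ge0 => //; apply: mulr_ge0 => //; apply: exprn_ge0.
have p2'pos : 0 < p2' by rewrite lt_def p2'0 Pfine_ge0.
rewrite -(ler_pM2r p2'pos).
apply: (@le_trans _ _ (a2 * (x ^+ n * p1') * p2)).
  by rewrite mulrAC; apply: ler_wpM2r.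
have -> : a2 * (x ^+ n * p1') * p2 = (a2 * x ^+ n) * (p1' * p2) by ring.
have -> : a2 * (x ^+ n.+1 * p1) * p2' = (a2 * x ^+ n) * (x * p1 * p2') by rewrite exprSr; ring.
by apply: ler_wpM2l => //; apply: mulr_ge0.
Qed.
End compare.


Lemma pr_split {R : realType} {d} {Om : measurableType d} (P : probability Om R) A B :
  measurable A -> measurable B ->
  fine (P A) = fine (P (A `&` B)) + fine (P (A `&` ~` B)).
Proof.
move=> mA mB.
have e : P A = (P (A `&` B) + P (A `&` ~` B))%E.
  rewrite -measureU //; last 3 first.
  - exact: measurableI.
  - by apply: measurableI => //; exact: measurableC.
  - by rewrite setIACA setICr !setI0.
  by rewrite -setIUr setUCr setIT.
rewrite e fineD // fin_num_measure //; [exact: measurableI|].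
by apply: measurableI => //; exact: measurableC.
Qed.

Section cost.
Context {R : realType} {dL : measure_display} {Lam : measurableType dL}.
Context (D : set (probability Lam R)) {d : measure_display} {Om : measurableType d}
  (P : probability Om R) (F : nat -> set (set Om)) (Y : nat -> Om -> Lam)
  (mu : nat -> Om -> probability Lam R).
Hypothesis H : random_search_run D P F Y mu.
Variables (K Rr : nat) (A : set (K.-tuple Lam)) (q : R).
Hypotheses (mA : measurable A) (q0 : 0 <= q) (q1 : q <= 1).
Hypothesis hG : forall m E, F m E ->
  fine (P (E `&` Zt Y m K @^-1` A)) <= q * fine (P E).

Local Notation n := (K * Rr)%N.

Fixpoint grp j r : set Om :=
  match r with
  | 0 => setT
  | r'.+1 => grp j r' `&` Zt Y (j * n + r' * K) K @^-1` A
  end.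

Lemma grp_F j r : F (j * n + r * K) (grp j r).
Proof.
elim: r => [|r IH] /=; first exact: (run_T H).
apply: (run_I H).
  by apply: (run_mono H) IH; rewrite leq_add2l leq_mul2r leqnSn orbT.
have -> : (j * n + r.+1 * K = j * n + r * K + K)%N by rewrite mulSn [(K + _)%N]addnC addnA.
exact: (Zt_F H).
Qed.

Lemma grp_bound j r E : F (j * n) E -> fine (P (E `&` grp j r)) <= q ^+ r * fine (P E).
Proof.
move=> FE; elim: r => [|r IH] /=; first by rewrite setIT expr0 mul1r.
rewrite setIA.
have FEr : F (j * n + r * K) (E `&` grp j r).
  apply: (run_I H) (grp_F j r).
  by apply: (run_mono H) FE; rewrite leq_addr.
apply: (le_trans (hG FEr)).
by rewrite exprS -mulrA ler_wpM2l.
Qed.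

Lemma grp_mem j r w : grp j r w <-> forall g, (g < r)%N -> A (Zt Y (j * n + g * K) K w).
Proof.
elim: r => [|r IH] /=; first by split => // _ g.
split.
  move=> [/IH h hA] g; rewrite ltnS leq_eqVlt => /orP[/eqP ->//|]; exact: h.
move=> h; split; last exact: h.
by apply/IH => g gr; apply: h; rewrite ltnS ltnW.
Qed.

Lemma log_group j g w : (g < Rr)%N ->
  take K (drop (g * K) (log_of n Y j w)) = tval (Zt Y (j * n + g * K) K w).
Proof.
move=> gR.
have hK : (g * K + K <= n)%N.
  by rewrite addnC -mulSn mulnC leq_mul2l gR orbT.
have gKn : (g * K <= n)%N by exact: leq_trans (leq_addr K _) hK.
have hs : (K <= size (drop (g * K) (log_of n Y j w)))%N.
  by rewrite size_drop size_mkseq leq_subRL.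
apply: (@eq_from_nth _ (Y 0 w)).
  by rewrite size_takel // size_tuple.
move=> i; rewrite size_takel // => iK.
rewrite nth_take // nth_drop Zt_val !nth_mkseq //.
  by rewrite addnA.
by apply: (leq_trans _ hK); rewrite ltn_add2l.
Qed.

Fixpoint Nk k : set Om :=
  match k with
  | 0 => setT
  | k'.+1 => Nk k' `&` ~` grp k' Rr
  end.

Lemma Nk_F k : F (k * n) (Nk k).
Proof.
elim: k => [|k IH] /=; first exact: (run_T H).
apply: (run_I H).
  by apply: (run_mono H) IH; rewrite leq_mul2r leqnSn orbT.
apply: (run_C H).
have -> : (k.+1 * n = k * n + Rr * K)%N by rewrite mulSn addnC [(Rr * K)%N]mulnC.
exact: grp_F.
Qed.

Lemma Nk_mem k w : Nk k w -> forall j, (j < k)%N -> ~ grp j Rr w.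
Proof.
elim: k => [//|k IH] /= [/IH h ng] j.
by rewrite ltnS leq_eqVlt => /orP[/eqP ->//|]; exact: h.
Qed.

Lemma Nk_bound k : (1 - q ^+ Rr) ^+ k <= fine (P (Nk k)).
Proof.
have qR1 : q ^+ Rr <= 1 by exact: exprn_ile1.
elim: k => [|k IH] /=.
  by rewrite expr0 probability_setT.
have mN := run_meas H (Nk_F k).
have mG := run_meas H (grp_F k Rr).
have := pr_split P mN mG.
have := grp_bound Rr (Nk_F k).
move=> b e.
rewrite exprS.
apply: (@le_trans _ _ ((1 - q ^+ Rr) * fine (P (Nk k)))).
  by apply: ler_wpM2l => //; rewrite subr_ge0.
lra.
Qed.

Lemma sum_lt_min (M t : nat) : (\sum_(k < M) (k < t : nat))%N = minn M t.
Proof.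
elim: M => [|M IH]; first by rewrite big_ord0 min0n.
rewrite big_ord_recr /= IH.
by case: (ltnP M t) => Mt; rewrite ?addn1 ?addn0; lia.
Qed.

Lemma cost_bound (T J : Om -> nat) (mT : measurable_fun setT T)
  (hae : {ae P, forall w, (J w < T w)%N /\ grp (J w) Rr w}) M :
  ((n%:R * \sum_(k < M) (1 - q ^+ Rr) ^+ k)%:E <=
     \int[P]_w (((n * T w)%N)%:R)%:E)%E.
Proof.
move: hae; rewrite /prop_near1 /almost_everywhere => -[Nul [mNul PNul sub]].
pose Ak k := [set w | (k < T w)%N].
have mAk k : measurable (Ak k).
  have -> : Ak k = T @^-1` [set i | (k < i)%N] by [].
  by rewrite -[X in measurable X]setTI; apply: mT.
have pk k : (1 - q ^+ Rr) ^+ k <= fine (P (Ak k)).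
  apply: le_trans (Nk_bound k) _.
  have sNk : Nk k `<=` Ak k `|` Nul.
    move=> w Nw; case: (pselect (Nul w)) => [?|nN]; [by right|left].
    have [JT gJ] : (J w < T w)%N /\ grp (J w) Rr w.
      by apply: contrapT => h; apply: nN; apply: sub.
    rewrite /Ak /= ltnNge; apply/negP => Tk.
    exact: (Nk_mem Nw (leq_trans JT Tk)).
  have mN := run_meas H (Nk_F k).
  rewrite -lee_fin -!PfineE //.
  apply: (le_trans (le_measure _ _ _ sNk)); rewrite ?inE //; first exact: measurableU.
  apply: (@le_trans _ _ (P (Ak k) + P Nul)%E); first exact: measureU2.
  by rewrite PNul adde0.
have mind k : measurable_fun setT (fun w => ((n%:R : R) * \1_(Ak k) w)%:E).
  apply/measurable_EFinP; apply: measurable_funM; first exact: measurable_cst.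
  exact/measurable_indicP.
apply: (@le_trans _ _ (\int[P]_w (\sum_(k < M) (n%:R * \1_(Ak k) w)%:E))%E).
  rewrite ge0_integral_sum //.
  rewrite mulr_sumr -sumEFin; apply: lee_sum => k _.
  under eq_integral do rewrite EFinM.
  rewrite ge0_integralZl_EFin //; last by apply/measurable_EFinP; exact/measurable_indicP.
  rewrite integral_indic // setIT.
  apply: (@le_trans _ _ ((n%:R)%:E * (fine (P (Ak k)))%:E)%E).
    by rewrite -EFinM lee_fin ler_wpM2l.
  by rewrite fineK // fin_num_measure.
apply: ge0_le_integral => //.
- by move=> w _; apply: sume_ge0 => k _; rewrite lee_fin mulr_ge0 // indicE.
- by apply: emeasurable_sum => k; exact: mind.
- apply: (measurableT_comp (f := fun k : nat => (((n * k)%N)%:R : R)%:E)) => //.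
move=> w _.
have -> : (\sum_(k < M) ((n%:R : R) * \1_(Ak k) w)%:E)%E =
    ((\sum_(k < M) ((n%:R : R) * \1_(Ak k) w)))%:E by rewrite -sumEFin.
rewrite lee_fin -mulr_sumr [X in _ <= X]natrM; apply: ler_wpM2l => //.
under eq_bigr do rewrite indicE.
have -> : \sum_(i < M) ((w \in Ak i)%:R : R) = ((\sum_(i < M) (i < T w : nat))%N)%:R.
  rewrite natr_sum; apply: eq_bigr => i _.
  have -> : (w \in Ak i) = (i < T w)%N.
    by apply/idP/idP => [/set_mem //|h]; apply/mem_set.
  by [].
by rewrite sum_lt_min ler_nat geq_minr.
Qed.

End cost.


Lemma bern (R : realFieldType) (u : R) (m : nat) : 0 <= u -> 1 + m%:R * u <= (1 + u) ^+ m.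
Proof.
move=> u0; elim: m => [|m IH]; first by rewrite mul0r addr0 expr0.
rewrite exprS -natr1.
have h : 0 <= m%:R * u * u by rewrite !mulr_ge0.
apply: (@le_trans _ _ ((1 + u) * (1 + m%:R * u))); first nra.
by apply: ler_wpM2l => //; rewrite addr_ge0.
Qed.

Lemma geom (R : comRingType) (r : R) M : (1 - r) * \sum_(k < M) r ^+ k = 1 - r ^+ M.
Proof.
elim: M => [|M IH]; first by rewrite big_ord0 mulr0 expr0 subrr.
by rewrite big_ord_recr /= mulrDr IH exprS; ring.
Qed.

Lemma arith (R : realType) (K Rr : nat) (t X : R) : (0 < K)%N -> 0 < t -> 0 < X ->
  Num.sqrt (t * X / K%:R) <= Rr%:R ->
  exists M, t < (K * Rr)%:R * \sum_(k < M) (1 - (X / (1 + X)) ^+ Rr) ^+ k.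
Proof.
move=> K0 t0 X0 hR.
have Kp : 0 < K%:R :> R by rewrite ltr0n.
have a0 : 0 < t * X / K%:R by rewrite !divr_gt0 ?mulr_gt0.
have Rp : 0 < Rr%:R :> R by apply: lt_le_trans hR; rewrite sqrtr_gt0.
have tle : t * X / K%:R <= Rr%:R ^+ 2.
  rewrite -(sqr_sqrtr (ltW a0)).
  have := sqrtr_ge0 (t * X / K%:R); nra.
set q := X / (1 + X).
have q0 : 0 < q by rewrite divr_gt0 // addr_gt0.
have q1 : q < 1 by rewrite ltr_pdivrMr ?addr_gt0 // mul1r ltrDr.
set s := q ^+ Rr.
have s0 : 0 < s by rewrite exprn_gt0.
have s1 : s <= 1 by rewrite exprn_ile1 // ltW.
have key : s * (1 + Rr%:R / X) <= 1.
  have e : s * (1 + X^-1) ^+ Rr = 1.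
    rewrite /s -exprMn.
    have -> : q * (1 + X^-1) = 1.
      by rewrite /q; field; rewrite !gt_eqF ?addr_gt0.
    by rewrite expr1n.
  rewrite -[leRHS]e; apply: ler_wpM2l; first exact: ltW.
  by apply: bern; rewrite invr_ge0 ltW.
have tX : t <= K%:R * Rr%:R ^+ 2 / X.
  by rewrite ler_pdivlMr // -ler_pdivrMl // mulrC.
have sRX : s * Rr%:R / X < 1.
  have : s * (Rr%:R / X) = s * Rr%:R / X by rewrite mulrA.
  move=> e; rewrite -e; nra.
have n0 : (K * Rr)%:R = K%:R * Rr%:R :> R by rewrite natrM.
have ts : t * s < (K * Rr)%:R.
  rewrite n0.
  apply: (@le_lt_trans _ _ (K%:R * Rr%:R ^+ 2 / X * s)).
    by apply: ler_wpM2r => //; exact: ltW.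
  have -> : K%:R * Rr%:R ^+ 2 / X * s = K%:R * Rr%:R * (s * Rr%:R / X).
    by rewrite expr2; ring.
  by rewrite -[ltRHS]mulr1 ltr_pM2l // mulr_gt0.
set n := (K * Rr)%:R : R.
set del := n - t * s.
have del0 : 0 < del by rewrite subr_gt0.
have b0 : 0 <= n / (del * s) by rewrite divr_ge0 // ?mulr_ge0 // ltW.
exists (Num.bound (n / (del * s))).
set M := Num.bound _.
have hM : n / (del * s) < M%:R by exact: archi_boundP.
set r := 1 - s.
have r0 : 0 <= r by rewrite subr_ge0.
have rM : r ^+ M * (1 + M%:R * s) <= 1.
  apply: (@le_trans _ _ (r ^+ M * (1 + s) ^+ M)).
    apply: ler_wpM2l; [exact: exprn_ge0|exact: bern (ltW s0)].
  rewrite -exprMn; apply: exprn_ile1.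
    by apply: mulr_ge0 => //; rewrite addr_ge0 // ltW.
  have -> : r * (1 + s) = 1 - s * s by rewrite /r; ring.
  have := mulr_ge0 (ltW s0) (ltW s0); lra.
have Ms : n < del * (M%:R * s).
  by move: hM; rewrite ltr_pdivrMr ?mulr_gt0 // => h; nra.
have nrM : n * r ^+ M < del.
  have rM0 : 0 <= r ^+ M by exact: exprn_ge0.
  have Ms0 : 0 < M%:R * s.
    by apply: mulr_gt0 => //; apply: le_lt_trans hM.
  set a := r ^+ M in rM rM0 *; set b := M%:R * s in Ms Ms0 rM *.
  have h1 : n * a <= del * b * a by apply: ler_wpM2r => //; exact: ltW.
  have h2 : del * (a * b) <= del * (1 - a).
    by apply: ler_wpM2l; [exact: ltW|lra].
  have h3 : 0 <= del * a by apply: mulr_ge0 => //; exact: ltW.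
  have [az|az] := eqVneq a 0.
    by rewrite az mulr0.
  have h4 : 0 < del * a by rewrite mulr_gt0 // lt_def az rM0.
  have e : del * b * a = del * (a * b) by ring.
  lra.
have g := geom r M.
rewrite -(ltr_pM2r s0).
move: g; rewrite (_ : 1 - r = s); last by rewrite /r; ring.
move=> g.
have -> : n * (\sum_(k < M) r ^+ k) * s = n * (s * \sum_(k < M) r ^+ k) by ring.
rewrite g; rewrite /del in nrM; lra.
Qed.


Section dicho.
Context {R : realType} {dL : measure_display} {Lam : measurableType dL}.
Context (D : set (probability Lam R)) (gamma : R).
Hypothesis hD : forall mu nu : probability Lam R, D mu -> D nu ->
          forall A : set Lam, measurable A -> (mu A <= (expR gamma)%:E * nu A)%E.
Context {d1 : measure_display} {Om1 : measurableType d1}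
  (P1 : probability Om1 R) (F1 : nat -> set (set Om1)) (Y1 : nat -> Om1 -> Lam)
  (mu1 : nat -> Om1 -> probability Lam R).
Hypothesis H1 : random_search_run D P1 F1 Y1 mu1.
Context {d2 : measure_display} {Om2 : measurableType d2}
  (P2 : probability Om2 R) (F2 : nat -> set (set Om2)) (Y2 : nat -> Om2 -> Lam)
  (mu2 : nat -> Om2 -> probability Lam R).
Hypothesis H2 : random_search_run D P2 F2 Y2 mu2.

Lemma dichotomy (K : nat) (A B : set (K.-tuple Lam)) (q : R) :
  measurable A -> measurable B -> A `&` B = set0 ->
  q = expR gamma ^+ K / (1 + expR gamma ^+ K) ->
  (forall m E, F1 m E -> fine (P1 (E `&` Zt Y1 m K @^-1` A)) <= q * fine (P1 E)) \/
  (forall m E, F2 m E -> fine (P2 (E `&` Zt Y2 m K @^-1` B)) <= q * fine (P2 E)).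
Proof.
move=> mA mB AB qE.
set X := expR gamma ^+ K in qE.
have X0 : 0 < X by rewrite exprn_gt0 // expR_gt0.
have q0 : 0 <= q by rewrite qE divr_ge0 // ?addr_ge0 // ltW.
have qX : X * (1 - q) = q by rewrite qE; field; rewrite gt_eqF // addr_gt0.
have q1 : 0 < 1 - q by rewrite qE subr_gt0 ltr_pdivrMr ?addr_gt0 // mul1r ltrDr.
case: (pselect (forall m E, F1 m E -> fine (P1 (E `&` Zt Y1 m K @^-1` A)) <= q * fine (P1 E))) => [h|nh1];
  first by left.
right => m2 E2 FE2; apply: contrapT => h2.
have hb : q * fine (P2 E2) < fine (P2 (E2 `&` Zt Y2 m2 K @^-1` B)).
  by rewrite ltNge; apply/negP.
have [m1 [E1 [FE1 ha]]] : exists m1 E1, F1 m1 E1 /\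
    ~ (fine (P1 (E1 `&` Zt Y1 m1 K @^-1` A)) <= q * fine (P1 E1)).
  apply: contrapT => nex; apply: nh1 => m E FE; apply: contrapT => nle.
  by apply: nex; exists m, E.
have {}ha : q * fine (P1 E1) < fine (P1 (E1 `&` Zt Y1 m1 K @^-1` A)).
  by rewrite ltNge; apply/negP.
have mE1 := run_meas H1 FE1; have mE2 := run_meas H2 FE2.
have mZ1 := run_meas H1 (Zt_F H1 m1 mA).
have mZ2 := run_meas H2 (Zt_F H2 m2 mA).
have mZ2B := run_meas H2 (Zt_F H2 m2 mB).
have cmp := compare (n := K) hD H1 H2 FE1 FE2 mA.
have mI1 : measurable (E1 `&` Zt Y1 m1 K @^-1` A) := measurableI _ _ mE1 mZ1.
have mI2 : measurable (E2 `&` Zt Y2 m2 K @^-1` A) := measurableI _ _ mE2 mZ2.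
move: cmp; rewrite (fineL1 _ _ (fin_num_measure _ _ mI1) (fin_num_measure _ _ mI2)).
set a1 := fine (P1 (E1 `&` _)); set p1 := fine (P1 E1).
set a2 := fine (P2 (E2 `&` Zt Y2 m2 K @^-1` A)); set p2 := fine (P2 E2).
move=> cmp.
set b2 := fine (P2 (E2 `&` Zt Y2 m2 K @^-1` B)) in hb.
have spl := pr_split P2 mE2 mZ2.
set c2 := fine (P2 (E2 `&` ~` _)) in spl.
have {}spl : p2 = a2 + c2 by exact: spl.
have {}hb : q * p2 < b2 by exact: hb.
have {}ha : q * p1 < a1 by exact: ha.
have bc : b2 <= c2.
  apply: Pfine_le; [exact: measurableI|apply: measurableI => //; exact: measurableC|].
  move=> w [E2w Bw]; split => // Aw.
  have : (A `&` B) (Zt Y2 m2 K w) by [].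
  by rewrite AB.
clear AB; rewrite -/X in cmp.
have a1p1 : a1 <= p1 by apply: Pfine_le => //; exact: subIsetl.
have a20 : 0 <= a2 by exact: Pfine_ge0.
have c20 : 0 <= c2 by exact: Pfine_ge0.
have p10 : 0 <= p1 by exact: Pfine_ge0.
have p20 : 0 <= p2 by exact: Pfine_ge0.
have [p2z|p2z] := eqVneq p2 0.
  by rewrite p2z mulr0 in hb; rewrite p2z in spl; lra.
have p2pos : 0 < p2 by rewrite lt_def p2z p20.
have k1 : q * p1 * p2 < a1 * p2 by rewrite ltr_pM2r.
have a2lt : a2 <= (1 - q) * p2 by lra.
have k2 : X * p1 * a2 <= X * p1 * ((1 - q) * p2).
  by apply: ler_wpM2l => //; apply: mulr_ge0 => //; exact: ltW.
have e : X * p1 * ((1 - q) * p2) = (X * (1 - q)) * p1 * p2 by ring.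
rewrite qX in e.
have e2 : a2 * (X * p1) = X * p1 * a2 by ring.
lra.
Qed.

End dicho.


Lemma one_side {R : realType} {dL : measure_display} {Lam : measurableType dL}
  (D : set (probability Lam R)) {d : measure_display} {Om : measurableType d}
  (P : probability Om R) (F : nat -> set (set Om)) (Y : nat -> Om -> Lam)
  (mu : nat -> Om -> probability Lam R) (H : random_search_run D P F Y mu)
  (K Rr : nat) (Bp : seq Lam -> Prop) (q t X : R)
  (hK : (0 < K)%N) (ht : 0 < t) (X0 : 0 < X)
  (hR : Num.sqrt (t * X / K%:R) <= Rr%:R)
  (qE : q = X / (1 + X))
  (mA : measurable [set L : K.-tuple Lam | Bp (tval L)])
  (hG : forall m E, F m E -> fine (P (E `&` Zt Y m K @^-1` [set L : K.-tuple Lam | Bp (tval L)]))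
          <= q * fine (P E))
  (T J : Om -> nat) (mT : measurable_fun setT T)
  (hae : {ae P, forall w, (J w < T w)%N /\
           (size (log_of (K * Rr) Y (J w) w) = (K * Rr)%N /\
            forall g, (g < Rr)%N -> Bp (take K (drop (g * K) (log_of (K * Rr) Y (J w) w)))) })
  (hc : (\int[P]_w ((((K * Rr) * T w)%N)%:R : R)%:E <= t%:E)%E) : False.
Proof.
have q0 : 0 <= q by rewrite qE divr_ge0 // ?addr_ge0 // ltW.
have q1 : q <= 1 by rewrite qE ler_pdivrMr ?addr_gt0 // mul1r lerDr.
pose A := [set L : K.-tuple Lam | Bp (tval L)].
have hae' : {ae P, forall w, (J w < T w)%N /\ grp Y Rr A (J w) Rr w}.
  move: hae; rewrite /prop_near1 /almost_everywhere => -[Nul [mNul PNul sub]].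
  exists Nul; split => // w /= nw; apply: sub => -[JT [_ hdef]]; apply: nw; split => //.
  apply/grp_mem => g gR; rewrite /A /= -(log_group Y K (J w) w gR).
  exact: hdef.
have cb := cost_bound H mA q0 q1 hG mT hae'.
have [M hM] := arith hK ht X0 hR.
have := cb M.
move=> cbM; rewrite -qE in hM.
have := le_trans cbM hc; rewrite lee_fin => h.
by have := lt_le_trans hM h; rewrite ltxx.
Qed.

Unset Implicit Arguments. Set Strict Implicit. Set Printing Implicit Defensive.

Theorem mainTheorem1 (R : realType) (dL : measure_display) (Lam : measurableType dL)
  (D : set (probability Lam R)) (gamma : R)
  (hD : forall mu nu : probability Lam R, D mu -> D nu ->
          forall A : set Lam, measurable A -> (mu A <= (expR gamma)%:E * nu A)%E)
  (Pr : Type) (neg : Pr -> Pr) (Bn : Pr -> seq Lam -> Prop) (K Rr : nat) (t : R)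
  (hK : (0 < K)%N)
  (hBn_size : forall p L, Bn p L -> size L = K)
  (hBn_cons : forall p L, ~ (Bn p L /\ Bn (neg p) L))
  (hBn_meas : forall p, measurable [set L : K.-tuple Lam | Bn p (tval L)])
  (ht : 0 < t)
  (hR : Num.sqrt (t * expR (gamma * K%:R) / K%:R) <= Rr%:R) :
  non_deceptive neg D (K * Rr)%N t (defended K Rr Bn).
Proof.
move=> p [[d1 [Om1 [P1 [F1 [Y1 [mu1 [T1 [J1 [H1 mT1 hae1 hc1]]]]]]]]]
          [d2 [Om2 [P2 [F2 [Y2 [mu2 [T2 [J2 [H2 mT2 hae2 hc2]]]]]]]]]].
set X := expR gamma ^+ K.
have X0 : 0 < X by rewrite exprn_gt0 // expR_gt0.
have XE : expR (gamma * K%:R) = X by rewrite expRM_natr.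
rewrite XE in hR.
set q := X / (1 + X).
have AB : [set L : K.-tuple Lam | Bn p (tval L)] `&` [set L : K.-tuple Lam | Bn (neg p) (tval L)] = set0.
  by apply/seteqP; split => // L [h1 h2]; apply: (hBn_cons p (tval L)).
have [hG|hG] := dichotomy hD H1 H2 (hBn_meas p) (hBn_meas (neg p)) AB (erefl q).
  exact: (one_side H1 hK ht X0 hR (erefl q) (hBn_meas p) hG mT1 hae1 hc1).
exact: (one_side H2 hK ht X0 hR (erefl q) (hBn_meas (neg p)) hG mT2 hae2 hc2).
Qed.
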